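(* Assume $c+\kappa>0$. (a) $R(\hat t_XX)R(\hat t_YY)$ and $R(\hat t_YY)R(\hat t_XX)$ are both rotations by angle $\pi$ (and their axes are orthogonal to $W_+$). (b) For all $t\in\mathbb R$: $R(\hat t_XX)R(\hat t_YY)=R(-\hat t_YY)R(-\hat t_XX)$, $R(\hat t_YY)R(\hat t_XX)=R(-\hat t_XX)R(-\hat t_YY)$, $R(\hat t_YY)R(\hat t_XX)R(tW_+)=R(-tW_+)R(\hat t_YY)R(\hat t_XX)$, $R(\hat t_XX)R(\hat t_YY)R(-tW_+)=R(tW_+)R(\hat t_XX)R(\hat t_YY)$. (c) If $\kappa=0$, then $R(\pi Y)R(tW_+)=R(-tW_+)R(\pi Y)$ for all $t\in\mathbb R$.
   Context: Fix unit vectors $X,Y\in\mathbb R^3$ with angle $\alpha\in(0,\pi/2]$, $c=\cos\alpha\in[0,1)$, and $\kappa\in[0,1]$. For a unit vector $v$, $R(tv)$ is rotation by angle $t$ about $v$ (counterclockwise viewed from the tip); for nonzero non-unit $v$, $R(tv):=R((t|v|)v/|v|)$. $W_+=(1+\kappa c)X-(\kappa+c)Y$. When $c+\kappa>0$: $\hat t_X=\arccos\frac{c-\kappa}{c+\kappa}$ and $\hat t_Y=\arccos\left(-\frac{1-\kappa c}{1+\kappa c}\right)$, both in $[0,\pi]$. *)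

(* Defs.v *)
From Stdlib Require Import Reals Lra.
Open Scope R_scope.

Record vec3 := V3 { vx : R; vy : R; vz : R }.
Record mat3 := M3 { a11 : R; a12 : R; a13 : R;
                    a21 : R; a22 : R; a23 : R;
                    a31 : R; a32 : R; a33 : R }.

Definition dot (u v : vec3) : R := vx u * vx v + vy u * vy v + vz u * vz v.
Definition vnorm (v : vec3) : R := sqrt (dot v v).
Definition vscale (k : R) (v : vec3) : vec3 := V3 (k * vx v) (k * vy v) (k * vz v).
Definition vadd (u v : vec3) : vec3 := V3 (vx u + vx v) (vy u + vy v) (vz u + vz v).
Definition vsub (u v : vec3) : vec3 := V3 (vx u - vx v) (vy u - vy v) (vz u - vz v).

Definition mmul (A B : mat3) : mat3 :=
  M3 (a11 A * a11 B + a12 A * a21 B + a13 A * a31 B)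
     (a11 A * a12 B + a12 A * a22 B + a13 A * a32 B)
     (a11 A * a13 B + a12 A * a23 B + a13 A * a33 B)
     (a21 A * a11 B + a22 A * a21 B + a23 A * a31 B)
     (a21 A * a12 B + a22 A * a22 B + a23 A * a32 B)
     (a21 A * a13 B + a22 A * a23 B + a23 A * a33 B)
     (a31 A * a11 B + a32 A * a21 B + a33 A * a31 B)
     (a31 A * a12 B + a32 A * a22 B + a33 A * a32 B)
     (a31 A * a13 B + a32 A * a23 B + a33 A * a33 B).

(* Rot t u : rotation by angle t about the unit vector u, counterclockwise
   viewed from the tip of u (right-hand rule), given by Rodrigues' formula
   cos t I + sin t [u]_x + (1 - cos t) u u^T.  This is R(t u) for unit u. *)
Definition Rot (t : R) (u : vec3) : mat3 :=
  let x := vx u in let y := vy u in let z := vz u in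
  let C := cos t in let S := sin t in let D := 1 - C in
  M3 (C + D * x * x)     (D * x * y - S * z) (D * x * z + S * y)
     (D * y * x + S * z) (C + D * y * y)     (D * y * z - S * x)
     (D * z * x - S * y) (D * z * y + S * x) (C + D * z * z).

(* R(t v) for a nonzero, not necessarily unit v: R((t|v|) v/|v|). *)
Definition Rv (t : R) (v : vec3) : mat3 := Rot (t * vnorm v) (vscale (/ vnorm v) v).

Definition Wplus (kappa c : R) (X Y : vec3) : vec3 :=
  vsub (vscale (1 + kappa * c) X) (vscale (kappa + c) Y).

Definition that_X (kappa c : R) : R := acos ((c - kappa) / (c + kappa)).
Definition that_Y (kappa c : R) : R := acos (- ((1 - kappa * c) / (1 + kappa * c))).

(* Main.v *)
Require Import Defs.
From Stdlib Require Import Reals Lra.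
Open Scope R_scope.

Record quat := Q { qw : R; qx : R; qy : R; qz : R }.
Definition qmul (p q : quat) : quat :=
  Q (qw p * qw q - qx p * qx q - qy p * qy q - qz p * qz q)
    (qw p * qx q + qx p * qw q + qy p * qz q - qz p * qy q)
    (qw p * qy q - qx p * qz q + qy p * qw q + qz p * qx q)
    (qw p * qz q + qx p * qy q - qy p * qx q + qz p * qw q).
Definition qn (q : quat) := qw q * qw q - (qx q * qx q + qy q * qy q + qz q * qz q).
Definition Mq (q : quat) : mat3 :=
  M3 (qn q + 2 * qx q * qx q) (2 * qx q * qy q - 2 * qw q * qz q) (2 * qx q * qz q + 2 * qw q * qy q)
     (2 * qy q * qx q + 2 * qw q * qz q) (qn q + 2 * qy q * qy q) (2 * qy q * qz q - 2 * qw q * qx q)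
     (2 * qz q * qx q - 2 * qw q * qy q) (2 * qz q * qy q + 2 * qw q * qx q) (qn q + 2 * qz q * qz q).

Lemma Mq_mul p q : mmul (Mq p) (Mq q) = Mq (qmul p q).
Proof. destruct p, q; unfold Mq, qmul, qn, mmul; simpl; f_equal; ring. Qed.

Definition qrot (t : R) (u : vec3) : quat :=
  Q (cos (t/2)) (sin (t/2) * vx u) (sin (t/2) * vy u) (sin (t/2) * vz u).

Lemma Rot_q t u : dot u u = 1 -> Rot t u = Mq (qrot t u).
Proof.
  destruct u as [x y z]; unfold dot; simpl; intro hu.
  pose proof (sin2_cos2 (t/2)) as hcs; unfold Rsqr in hcs.
  set (c := cos (t/2)) in *; set (s := sin (t/2)) in *.
  assert (Ct : cos t = c*c - s*s) by (replace t with (2*(t/2)) by field; rewrite cos_2a; reflexivity).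
  assert (St : sin t = 2*s*c) by (replace t with (2*(t/2)) by field; apply sin_2a).
  unfold Rot, Mq, qrot, qn; simpl; fold c s.
  rewrite Ct, St.
  replace (1 - (c*c - s*s)) with (2*(s*s)) by lra.
  assert (E : s * x * (s * x) + s * y * (s * y) + s * z * (s * z) = s*s)
    by (transitivity (s*s*(x*x+y*y+z*z)); [ring | rewrite hu; ring]).
  rewrite E. f_equal; ring.
Qed.

Definition qv (q : quat) : vec3 := V3 (qx q) (qy q) (qz q).

Lemma Rot_PI a : dot a a = 1 -> Rot PI a = Mq (Q 0 (vx a) (vy a) (vz a)).
Proof. intro h; rewrite Rot_q by exact h; unfold qrot; rewrite cos_PI2, sin_PI2.
  f_equal; f_equal; ring. Qed.

Lemma conj_pi a w s : dot a a = 1 -> dot w w = 1 -> dot a w = 0 ->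
  mmul (Rot PI a) (Rot s w) = mmul (Rot (-s) w) (Rot PI a).
Proof.
  intros ha hw haw.
  rewrite (Rot_PI a ha), (Rot_q s w hw), (Rot_q (-s) w hw), !Mq_mul.
  f_equal. unfold qrot. replace (-s/2) with (-(s/2)) by field.
  rewrite cos_neg, sin_neg.
  destruct a as [a1 a2 a3], w as [w1 w2 w3]; unfold dot in haw; simpl in *.
  unfold qmul; simpl. f_equal.
  - apply Rminus_diag_uniq; transitivity (-2*sin (s/2)*(a1*w1+a2*w2+a3*w3)); [ring| rewrite haw; ring].
  - ring. - ring. - ring.
Qed.

Lemma Q_eta q : q = Q (qw q) (qx q) (qy q) (qz q).
Proof. destruct q; reflexivity. Qed.

Lemma Mq_zero_opp q : qw q = 0 ->
  Mq (Q (qw q) (- qx q) (- qy q) (- qz q)) = Mq q.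
Proof. destruct q; simpl; intros ->; unfold Mq, qn; simpl; f_equal; ring. Qed.

Definition qof (cc ss : R) (u : vec3) := Q cc (ss * vx u) (ss * vy u) (ss * vz u).

Section Alg.
Variables (X Y : vec3) (c k cX sX cY sY : R).
Hypotheses (hX : dot X X = 1) (hY : dot Y Y = 1) (hXY : dot X Y = c)
  (h1 : cX*cX + sX*sX = 1) (h2 : cY*cY + sY*sY = 1)
  (h3 : cX*cY = c*sX*sY) (h4 : cY*sX = k*cX*sY).

Lemma alg_w p : (p = qmul (qof cX sX X) (qof cY sY Y) \/ p = qmul (qof cY sY Y) (qof cX sX X)) ->
  qw p = 0.
Proof.
  intros [-> | ->]; unfold qmul, qof; simpl.
  - transitivity (cX*cY - sX*sY*dot X Y); [unfold dot; simpl; ring|]. rewrite hXY, h3; ring.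
  - transitivity (cX*cY - sX*sY*dot X Y); [unfold dot; simpl; ring|]. rewrite hXY, h3; ring.
Qed.

Lemma alg_n p : (p = qmul (qof cX sX X) (qof cY sY Y) \/ p = qmul (qof cY sY Y) (qof cX sX X)) ->
  dot (qv p) (qv p) = 1.
Proof.
  intros [-> | ->]; unfold qmul, qof, qv; simpl.
  - transitivity (cY*cY*sX*sX*dot X X + cX*cX*sY*sY*dot Y Y + 2*cX*cY*sX*sY*dot X Y
       + sX*sX*sY*sY*(dot X X * dot Y Y - dot X Y * dot X Y)); [unfold dot; simpl; ring|].
    rewrite hX, hY, hXY.
    transitivity ((cX*cX+sX*sX)*(cY*cY+sY*sY) - (cX*cY - c*sX*sY)*(cX*cY - c*sX*sY)); [ring|].
    rewrite h1, h2, h3; ring.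
  - transitivity (cY*cY*sX*sX*dot X X + cX*cX*sY*sY*dot Y Y + 2*cX*cY*sX*sY*dot X Y
       + sX*sX*sY*sY*(dot X X * dot Y Y - dot X Y * dot X Y)); [unfold dot; simpl; ring|].
    rewrite hX, hY, hXY.
    transitivity ((cX*cX+sX*sX)*(cY*cY+sY*sY) - (cX*cY - c*sX*sY)*(cX*cY - c*sX*sY)); [ring|].
    rewrite h1, h2, h3; ring.
Qed.

Lemma alg_W p : (p = qmul (qof cX sX X) (qof cY sY Y) \/ p = qmul (qof cY sY Y) (qof cX sX X)) ->
  dot (qv p) (Wplus k c X Y) = 0.
Proof.
  intros [-> | ->]; unfold qmul, qof, qv, Wplus, vsub, vscale; simpl.
  - transitivity (cY*sX*((1+k*c)*dot X X - (k+c)*dot X Y) + cX*sY*((1+k*c)*dot X Y - (k+c)*dot Y Y));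
      [unfold dot; simpl; ring|].
    rewrite hX, hY, hXY.
    transitivity ((1-c*c)*(cY*sX - k*cX*sY)); [ring|]. rewrite h4; ring.
  - transitivity (cY*sX*((1+k*c)*dot X X - (k+c)*dot X Y) + cX*sY*((1+k*c)*dot X Y - (k+c)*dot Y Y));
      [unfold dot; simpl; ring|].
    rewrite hX, hY, hXY.
    transitivity ((1-c*c)*(cY*sX - k*cX*sY)); [ring|]. rewrite h4; ring.
Qed.
End Alg.

Lemma half_acos r : -1 <= r <= 1 ->
  let C := cos (acos r / 2) in let S := sin (acos r / 2) in
  0 <= C /\ 0 <= S /\ C*C = (1+r)/2 /\ S*S = (1-r)/2.
Proof.
  intros hr C S. pose proof (acos_bound r) as hb. pose proof PI_RGT_0.
  pose proof (cos_acos r hr) as hc.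
  pose proof (sin2_cos2 (acos r / 2)) as h2; unfold Rsqr in h2.
  assert (e : cos (acos r) = 2 * C * C - 1)
    by (unfold C; replace (acos r) with (2 * (acos r / 2)) at 1 by field; apply cos_2a_cos).
  fold C S in h2.
  split; [unfold C; apply cos_ge_0; lra|].
  split; [unfold S; apply sin_ge_0; lra|].
  split; lra.
Qed.

Lemma sq_eq a b : 0 <= a -> 0 <= b -> a*a = b*b -> a = b.
Proof. intros. nra. Qed.

Lemma trig (c k : R) : 0 <= c -> c < 1 -> 0 <= k <= 1 -> c + k > 0 ->
  let cX := cos (that_X k c / 2) in let sX := sin (that_X k c / 2) in
  let cY := cos (that_Y k c / 2) in let sY := sin (that_Y k c / 2) in
  cX*cX + sX*sX = 1 /\ cY*cY + sY*sY = 1 /\ cX*cY = c*sX*sY /\ cY*sX = k*cX*sY.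
Proof.
  intros hc0 hc1 hk hp cX sX cY sY.
  assert (rX : -1 <= (c - k)/(c + k) <= 1).
  { set (r := (c-k)/(c+k)). assert (r*(c+k) = c-k) by (unfold r; field; lra). split; nra. }
  assert (hq : 1 + k*c > 0) by nra.
  assert (rY : -1 <= - ((1 - k*c)/(1 + k*c)) <= 1).
  { set (r := (1 - k*c)/(1 + k*c)). assert (r*(1+k*c) = 1 - k*c) by (unfold r; field; lra). split; nra. }
  destruct (half_acos _ rX) as [aX [bX [cX2 sX2]]].
  destruct (half_acos _ rY) as [aY [bY [cY2 sY2]]].
  unfold that_X, that_Y in *; fold cX sX cY sY in aX, bX, cX2, sX2, aY, bY, cY2, sY2.
  split; [lra|]. split; [lra|]. split.
  - apply sq_eq; [apply Rmult_le_pos; lra| repeat apply Rmult_le_pos; lra|].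
    transitivity ((cX*cX)*(cY*cY)); [ring|]. rewrite cX2, cY2.
    transitivity (c*c*(sX*sX)*(sY*sY)); [|ring]. rewrite sX2, sY2. field; lra.
  - apply sq_eq; [apply Rmult_le_pos; lra| repeat apply Rmult_le_pos; lra|].
    transitivity ((cY*cY)*(sX*sX)); [ring|]. rewrite sX2, cY2.
    transitivity (k*k*(cX*cX)*(sY*sY)); [|ring]. rewrite cX2, sY2. field; lra.
Qed.

Lemma mmul_assoc A B C : mmul (mmul A B) C = mmul A (mmul B C).
Proof. destruct A, B, C; unfold mmul; simpl; f_equal; ring. Qed.

Lemma Rot_negq t u cc ss : dot u u = 1 -> cos (t/2) = cc -> sin (t/2) = ss ->
  Rot (-t) u = Mq (qof cc (-ss) u).
Proof.
  intros h hc hs. rewrite Rot_q by exact h. unfold qrot, qof.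
  replace (-t/2) with (-(t/2)) by field. rewrite cos_neg, sin_neg, hc, hs. reflexivity.
Qed.

Lemma Rot_posq t u cc ss : dot u u = 1 -> cos (t/2) = cc -> sin (t/2) = ss ->
  Rot t u = Mq (qof cc ss u).
Proof. intros h hc hs. rewrite Rot_q by exact h. unfold qrot, qof. rewrite hc, hs. reflexivity. Qed.

Lemma pi_form p : qw p = 0 -> dot (qv p) (qv p) = 1 -> Mq p = Rot PI (qv p).
Proof. intros hw hn. rewrite Rot_PI by exact hn. rewrite (Q_eta p) at 1. rewrite hw. reflexivity. Qed.

Lemma unitW (W : vec3) : dot W W > 0 ->
  let n := vnorm W in let w := vscale (/ n) W in
  n > 0 /\ dot w w = 1 /\ (forall a, dot a W = 0 -> dot a w = 0).
Proof.
  intros hW n w.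
  assert (hn : n > 0) by (unfold n, vnorm; apply sqrt_lt_R0; lra).
  assert (hnn : n * n = dot W W) by (unfold n, vnorm; apply sqrt_sqrt; lra).
  split; [exact hn|]. split.
  - transitivity (/n * /n * dot W W); [unfold w, dot, vscale; simpl; ring|].
    rewrite <- hnn. field. lra.
  - intros a ha. transitivity (/n * dot a W); [unfold w, dot, vscale; simpl; ring|].
    rewrite ha; ring.
Qed.

Lemma conj_pi_W a W t : dot a a = 1 -> dot W W > 0 -> dot a W = 0 ->
  mmul (Rot PI a) (Rv t W) = mmul (Rv (-t) W) (Rot PI a).
Proof.
  intros ha hW haW. destruct (unitW W hW) as [hn [hw hwa]].
  unfold Rv. replace (-t * vnorm W) with (-(t * vnorm W)) by ring.
  apply conj_pi; auto.
Qed.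

Theorem proposition4p5 (X Y : vec3) (alpha kappa : R)
  (hX : dot X X = 1) (hY : dot Y Y = 1)
  (halpha : 0 < alpha <= PI / 2) (hXY : dot X Y = cos alpha)
  (hk : 0 <= kappa <= 1)
  (hpos : cos alpha + kappa > 0) :
  let c := cos alpha in
  let W := Wplus kappa c X Y in
  let tX := that_X kappa c in
  let tY := that_Y kappa c in
  (* (a) *)
  ((exists a : vec3, dot a a = 1 /\ dot a W = 0 /\
      mmul (Rot tX X) (Rot tY Y) = Rot PI a) /\
   (exists a : vec3, dot a a = 1 /\ dot a W = 0 /\
      mmul (Rot tY Y) (Rot tX X) = Rot PI a)) /\
  (* (b) *)
  (forall t : R,
     mmul (Rot tX X) (Rot tY Y) = mmul (Rot (- tY) Y) (Rot (- tX) X) /\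
     mmul (Rot tY Y) (Rot tX X) = mmul (Rot (- tX) X) (Rot (- tY) Y) /\
     mmul (mmul (Rot tY Y) (Rot tX X)) (Rv t W)
       = mmul (mmul (Rv (- t) W) (Rot tY Y)) (Rot tX X) /\
     mmul (mmul (Rot tX X) (Rot tY Y)) (Rv (- t) W)
       = mmul (mmul (Rv t W) (Rot tX X)) (Rot tY Y)) /\
  (* (c) *)
  (kappa = 0 -> forall t : R,
     mmul (Rot PI Y) (Rv t W) = mmul (Rv (- t) W) (Rot PI Y)).
Proof.
  intros c W tX tY.
  pose proof PI_RGT_0 as hPI.
  assert (hc0 : 0 <= c) by (unfold c; apply cos_ge_0; lra).
  assert (hs : 0 < sin alpha) by (apply sin_gt_0; lra).
  assert (hsc : sin alpha * sin alpha + c * c = 1) by (pose proof (sin2_cos2 alpha); unfold Rsqr in *; unfold c; lra).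
  assert (hc1 : c < 1) by nra.
  fold c in hXY, hpos.
  assert (hWW : dot W W > 0).
  { assert (E : dot W W = (1+kappa*c)*(1+kappa*c)*dot X X + (kappa+c)*(kappa+c)*dot Y Y
       - 2*(1+kappa*c)*(kappa+c)*dot X Y) by (unfold W, Wplus, vsub, vscale, dot; simpl; ring).
    rewrite E, hX, hY, hXY. apply Rlt_gt.
    replace ((1 + kappa * c) * (1 + kappa * c) * 1 + (kappa + c) * (kappa + c) * 1 -
      2 * (1 + kappa * c) * (kappa + c) * c) with
      ((1 + kappa*c - (kappa+c)*c)*(1 + kappa*c - (kappa+c)*c) + (kappa+c)*(kappa+c)*(1-c*c)) by ring.
    assert (0 < (kappa+c)*(kappa+c)*(1-c*c)) by (apply Rmult_lt_0_compat; nra).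
    nra. }
  destruct (trig c kappa hc0 hc1 hk hpos) as [h1 [h2 [h3 h4]]].
  fold tX tY in h1, h2, h3, h4.
  set (cX := cos (tX/2)) in *. set (sX := sin (tX/2)) in *.
  set (cY := cos (tY/2)) in *. set (sY := sin (tY/2)) in *.
  assert (RX : Rot tX X = Mq (qof cX sX X)) by (apply Rot_posq; auto).
  assert (RY : Rot tY Y = Mq (qof cY sY Y)) by (apply Rot_posq; auto).
  assert (RXn : Rot (-tX) X = Mq (qof cX (-sX) X)) by (apply Rot_negq; auto).
  assert (RYn : Rot (-tY) Y = Mq (qof cY (-sY) Y)) by (apply Rot_negq; auto).
  set (p := qmul (qof cX sX X) (qof cY sY Y)).
  set (q := qmul (qof cY sY Y) (qof cX sX X)).
  assert (pw : qw p = 0) by (eapply (alg_w X Y c cX sX cY sY); eauto).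
  assert (qw0 : qw q = 0) by (eapply (alg_w X Y c cX sX cY sY); eauto).
  assert (pn : dot (qv p) (qv p) = 1) by (eapply (alg_n X Y c cX sX cY sY); eauto).
  assert (qn1 : dot (qv q) (qv q) = 1) by (eapply (alg_n X Y c cX sX cY sY); eauto).
  assert (pW : dot (qv p) W = 0) by (eapply (alg_W X Y c kappa cX sX cY sY); eauto).
  assert (qW : dot (qv q) W = 0) by (eapply (alg_W X Y c kappa cX sX cY sY); eauto).
  assert (EP : mmul (Rot tX X) (Rot tY Y) = Rot PI (qv p))
    by (rewrite RX, RY, Mq_mul; apply pi_form; auto).
  assert (EQ : mmul (Rot tY Y) (Rot tX X) = Rot PI (qv q))
    by (rewrite RX, RY, Mq_mul; apply pi_form; auto).
  split; [split; [exists (qv p) | exists (qv q)]; auto|].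
  split.
  - intro t. split; [|split; [|split]].
    + rewrite EP, RXn, RYn, Mq_mul, <- (pi_form p) by auto.
      rewrite <- (Mq_zero_opp p pw). f_equal.
      unfold p, qmul, qof; simpl; f_equal; ring.
    + rewrite EQ, RXn, RYn, Mq_mul, <- (pi_form q) by auto.
      rewrite <- (Mq_zero_opp q qw0). f_equal.
      unfold q, qmul, qof; simpl; f_equal; ring.
    + rewrite EQ, mmul_assoc, EQ. apply conj_pi_W; auto.
    + rewrite EP, mmul_assoc, EP.
      pose proof (conj_pi_W (qv p) W (-t) pn hWW pW) as H.
      rewrite Ropp_involutive in H. exact H.
  - intros hk0 t. apply conj_pi_W; auto.
    unfold W, Wplus, vsub, vscale, dot in *; simpl.
    rewrite hk0. transitivity ((1 + 0*c) * (vx X * vx Y + vy X * vy Y + vz X * vz Y)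
      - (0 + c) * (vx Y * vx Y + vy Y * vy Y + vz Y * vz Y)); [ring|].
    rewrite hXY, hY. ring.
Qed.
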